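(* Let $S$ be a Stone relation algebra and let $C : S\to\mathbb{N}\cup\{\infty\}$ map each $x$ to the number of atoms below $x$. Then: 1. If $S$ is atomic, atom-rectangular and simple, then for all $x\in S$: $x$ is an atom $\iff C(x)=1$. 2. If $S$ is an atomic relation algebra, then for all $x\in S$: $x$ is an atom $\iff C(x)=1$. 3. If $S$ is atom-rectangular, then $C(\top)\le C(1)^2$. 4. If $S$ is atomic and simple with finitely many atoms, then $C(\top)\ge C(1)^2$. 5. If $S$ is atom-rectangular and atom-simple, then $C(\top)=C(1)^2$. 6. If $S$ has finitely many atoms, then $C(\top)\neq\infty$.
   Context: A Stone relation algebra is a structure $(S,\sqcup,\sqcap,\cdot,\overline{\,\cdot\,},{}^{\smile},\bot,\top,1)$ (write $xy$ for $x\cdot y$, $\overline{x}$ for the pseudocomplement, $x^{\smile}$ for the converse) such that: $(S,\sqcup,\sqcap,\bot,\top)$ is a bounded distributive lattice with order $x\sqsubseteq y\iff x\sqcup y=y$; $x\sqcap y=\bot\iff x\sqsubseteq\overline{y}$; $\overline{x}\sqcup\overline{\overline{x}}=\top$; $\cdot$ is associative with two-sided unit $1$, distributes over $\sqcup$ on both sides, and $\bot$ is a zero of $\cdot$; $x^{\smile\smile}=x$, $(xy)^{\smile}=y^{\smile}x^{\smile}$, $(x\sqcup y)^{\smile}=x^{\smile}\sqcup y^{\smile}$; $\overline{\overline{1}}=1$; $\overline{\overline{xy}}=\overline{\overline{x}}\,\overline{\overline{y}}$; $xy\sqcap z\sqsubseteq x(y\sqcap x^{\smile}z)$. A relation algebra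 is a Stone relation algebra with $\overline{\overline{x}}=x$ for all $x$. An atom is an element $x\neq\bot$ such that $\bot\neq y\sqsubseteq x$ implies $y=x$. An element $x$ is a rectangle if $x\top x\sqsubseteq x$, and simple if $\top x\top=\top$. $S$ is simple if every element other than $\bot$ is simple; atomic if every $x\neq\bot$ has an atom below it; atom-rectangular if every atom is a rectangle; atom-simple if every atom is simple. Here $\infty^2=\infty$ and $n\le\infty$. *)

(* Defs.v *)
From Stdlib Require Import List Arith Classical ClassicalEpsilon.
Import ListNotations.
Set Implicit Arguments.

Record StoneRA := {
  car :> Type;
  sup : car -> car -> car;
  inf : car -> car -> car;
  comp : car -> car -> car;
  pc : car -> car;
  conv : car -> car;
  bot : car;
  top : car;
  one : car;
  sup_assoc : forall x y z, sup x (sup y z) = sup (sup x y) z;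
  sup_comm : forall x y, sup x y = sup y x;
  sup_idem : forall x, sup x x = x;
  inf_assoc : forall x y z, inf x (inf y z) = inf (inf x y) z;
  inf_comm : forall x y, inf x y = inf y x;
  inf_idem : forall x, inf x x = x;
  sup_absorb : forall x y, sup x (inf x y) = x;
  inf_absorb : forall x y, inf x (sup x y) = x;
  inf_sup_distr : forall x y z, inf x (sup y z) = sup (inf x y) (inf x z);
  sup_bot : forall x, sup x bot = x;
  inf_top : forall x, inf x top = x;
  pc_galois : forall x y, inf x y = bot <-> sup x (pc y) = pc y;
  stone : forall x, sup (pc x) (pc (pc x)) = top;
  comp_assoc : forall x y z, comp x (comp y z) = comp (comp x y) z;
  comp_one_l : forall x, comp one x = x;
  comp_one_r : forall x, comp x one = x;
  comp_sup_l : forall x y z, comp (sup x y) z = sup (comp x z) (comp y z);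
  comp_sup_r : forall x y z, comp x (sup y z) = sup (comp x y) (comp x z);
  comp_bot_l : forall x, comp bot x = bot;
  comp_bot_r : forall x, comp x bot = bot;
  conv_invol : forall x, conv (conv x) = x;
  conv_comp : forall x y, conv (comp x y) = comp (conv y) (conv x);
  conv_sup : forall x y, conv (sup x y) = sup (conv x) (conv y);
  pc_pc_one : pc (pc one) = one;
  pc_pc_comp : forall x y, pc (pc (comp x y)) = comp (pc (pc x)) (pc (pc y));
  dedekind : forall x y z,
    sup (inf (comp x y) z) (comp x (inf y (comp (conv x) z)))
    = comp x (inf y (comp (conv x) z))
}.

Section Defs.
Variable S : StoneRA.

Definition le (x y : S) : Prop := sup S x y = y.

Definition relation_algebra : Prop := forall x : S, pc S (pc S x) = x.

Definition atom (x : S) : Prop :=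
  x <> bot S /\ forall y : S, y <> bot S -> le y x -> y = x.

Definition rectangle (x : S) : Prop :=
  le (comp S (comp S x (top S)) x) x.

Definition simple_el (x : S) : Prop :=
  comp S (comp S (top S) x) (top S) = top S.

Definition simple : Prop := forall x : S, x <> bot S -> simple_el x.
Definition atomic : Prop :=
  forall x : S, x <> bot S -> exists a, atom a /\ le a x.
Definition atom_rectangular : Prop := forall a : S, atom a -> rectangle a.
Definition atom_simple : Prop := forall a : S, atom a -> simple_el a.

Definition finitely_many_atoms : Prop :=
  exists l : list S, forall a, atom a -> In a l.

Definition atoms_below_card (x : S) (n : nat) : Prop :=
  exists l : list S, NoDup l /\ length l = n /\
    forall a, In a l <-> (atom a /\ le a x).

(** C x : number of atoms below x, in N ∪ {∞} (None = ∞). *)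
Definition C (x : S) : option nat :=
  match excluded_middle_informative (exists n, atoms_below_card x n) with
  | left H => Some (proj1_sig (constructive_indefinite_description _ H))
  | right _ => None
  end.
End Defs.

Definition osq (c : option nat) : option nat :=
  match c with Some n => Some (n * n) | None => None end.

Definition ole (a b : option nat) : Prop :=
  match a, b with
  | _, None => True
  | None, Some _ => False
  | Some m, Some n => m <= n
  end.

Arguments le {S} x y.
Arguments atom {S} x.
Arguments rectangle {S} x.
Arguments simple_el {S} x.
Arguments atoms_below_card {S} x n.
Arguments C {S} x.

(* Main.v *)
Require Import Defs.
From Stdlib Require Import List Arith Lia Classical ClassicalEpsilon.
Import ListNotations.
Arguments sup_assoc {s} x y z.
Arguments sup_comm {s} x y.
Arguments sup_idem {s} x.
Arguments inf_assoc {s} x y z.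
Arguments inf_comm {s} x y.
Arguments inf_idem {s} x.
Arguments sup_absorb {s} x y.
Arguments inf_absorb {s} x y.
Arguments inf_sup_distr {s} x y z.
Arguments sup_bot {s} x.
Arguments inf_top {s} x.
Arguments pc_galois {s} x y.
Arguments stone {s} x.
Arguments comp_assoc {s} x y z.
Arguments comp_one_l {s} x.
Arguments comp_one_r {s} x.
Arguments comp_sup_l {s} x y z.
Arguments comp_sup_r {s} x y z.
Arguments comp_bot_l {s} x.
Arguments comp_bot_r {s} x.
Arguments conv_invol {s} x.
Arguments conv_comp {s} x y.
Arguments conv_sup {s} x y.
Arguments pc_pc_comp {s} x y.
Arguments dedekind {s} x y z.
Arguments pc_pc_one {s}.

Notation "x ⊔ y" := (sup _ x y) (at level 50, left associativity).
Notation "x ⊓ y" := (inf _ x y) (at level 40, left associativity).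
Notation "x · y" := (comp _ x y) (at level 30, right associativity).
Notation "⊤" := (top _).
Notation "⊥" := (bot _).
Notation "𝟙" := (one _).
Notation "x ≤ y" := (le x y) (at level 70).

Lemma le_refl {S : StoneRA} (x : S) : x ≤ x.
Proof. unfold le; apply sup_idem. Qed.
Lemma le_antisym {S : StoneRA} (x y : S) : x ≤ y -> y ≤ x -> x = y.
Proof. unfold le; intros H H0. rewrite <- H0, sup_comm; exact H. Qed.
Lemma le_trans {S : StoneRA} (x y z : S) : x ≤ y -> y ≤ z -> x ≤ z.
Proof. unfold le; intros H H0. rewrite <- H0, sup_assoc, H; reflexivity. Qed.
Lemma le_inf {S : StoneRA} (x y : S) : x ≤ y <-> x ⊓ y = x.
Proof. unfold le; split; intro H.
 - rewrite <- H. apply inf_absorb.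
 - rewrite <- H, inf_comm, sup_comm. apply sup_absorb. Qed.
Lemma inf_le_l {S : StoneRA} (x y : S) : x ⊓ y ≤ x.
Proof. apply le_inf. rewrite inf_comm, inf_assoc, inf_idem; reflexivity. Qed.
Lemma inf_le_r {S : StoneRA} (x y : S) : x ⊓ y ≤ y.
Proof. apply le_inf. rewrite <- inf_assoc, inf_idem; reflexivity. Qed.
Lemma inf_glb {S : StoneRA} (z x y : S) : z ≤ x -> z ≤ y -> z ≤ x ⊓ y.
Proof. rewrite !le_inf; intros H H0. rewrite inf_assoc, H, H0; reflexivity. Qed.
Lemma le_top {S : StoneRA} (x : S) : x ≤ ⊤.
Proof. apply le_inf, inf_top. Qed.
Lemma bot_le {S : StoneRA} (x : S) : ⊥ ≤ x.
Proof. unfold le; rewrite sup_comm; apply sup_bot. Qed.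
Lemma le_bot {S : StoneRA} (x : S) : x ≤ ⊥ -> x = ⊥.
Proof. intro H; apply le_antisym; auto using bot_le. Qed.
Lemma inf_mono {S : StoneRA} (x y x' y' : S) : x ≤ x' -> y ≤ y' -> x ⊓ y ≤ x' ⊓ y'.
Proof. intros; apply inf_glb; [eapply le_trans; [apply inf_le_l|] | eapply le_trans; [apply inf_le_r|]]; auto. Qed.

Lemma le_pc {S : StoneRA} (x y : S) : x ≤ pc S y <-> x ⊓ y = ⊥.
Proof. unfold le; split; apply pc_galois. Qed.
Lemma pc_inf {S : StoneRA} (x : S) : x ⊓ pc S x = ⊥.
Proof. rewrite inf_comm. apply le_pc, le_refl. Qed.
Lemma le_pcpc {S : StoneRA} (x : S) : x ≤ pc S (pc S x).
Proof. apply le_pc, pc_inf. Qed.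
Lemma pc_anti {S : StoneRA} (x y : S) : x ≤ y -> pc S y ≤ pc S x.
Proof. intro H. apply le_pc. apply le_bot. rewrite <- (pc_inf y), inf_comm.
  apply inf_mono; auto using le_refl. Qed.
Lemma pcpc_mono {S : StoneRA} (x y : S) : x ≤ y -> pc S (pc S x) ≤ pc S (pc S y).
Proof. intro; do 2 apply pc_anti; auto. Qed.
Lemma pcpc_top {S : StoneRA} : pc S (pc S ⊤) = ⊤.
Proof. apply le_antisym; auto using le_top, le_pcpc. Qed.

Lemma comp_mono_l {S : StoneRA} (x y z : S) : x ≤ y -> x · z ≤ y · z.
Proof. unfold le; intro H; rewrite <- comp_sup_l, H; reflexivity. Qed.
Lemma comp_mono_r {S : StoneRA} (x y z : S) : x ≤ y -> z · x ≤ z · y.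
Proof. unfold le; intro H; rewrite <- comp_sup_r, H; reflexivity. Qed.
Lemma comp_mono {S : StoneRA} (x y x' y' : S) : x ≤ x' -> y ≤ y' -> x · y ≤ x' · y'.
Proof. intros; eapply le_trans; [apply comp_mono_l|apply comp_mono_r]; eauto. Qed.
Lemma conv_mono {S : StoneRA} (x y : S) : x ≤ y -> conv S x ≤ conv S y.
Proof. unfold le; intro H; rewrite <- conv_sup, H; reflexivity. Qed.
Lemma conv_le {S : StoneRA} (x y : S) : conv S x ≤ conv S y -> x ≤ y.
Proof. intro H; apply conv_mono in H; rewrite !conv_invol in H; exact H. Qed.
Lemma conv_one {S : StoneRA} : conv S 𝟙 = 𝟙.
Proof. rewrite <- (comp_one_l (conv S 𝟙)).
  rewrite <- (conv_invol (one S · conv S 𝟙)), conv_comp, conv_invol, comp_one_l.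
  apply conv_invol. Qed.
Lemma conv_top {S : StoneRA} : conv S ⊤ = ⊤.
Proof. apply le_antisym; auto using le_top. apply conv_le. rewrite conv_invol; apply le_top. Qed.
Lemma conv_bot {S : StoneRA} : conv S ⊥ = ⊥.
Proof. apply le_bot. apply conv_le. rewrite conv_invol; apply bot_le. Qed.
Lemma conv_inf {S : StoneRA} (x y : S) : conv S (x ⊓ y) = conv S x ⊓ conv S y.
Proof. apply le_antisym.
 - apply inf_glb; apply conv_mono; auto using inf_le_l, inf_le_r.
 - apply conv_le. rewrite conv_invol. apply inf_glb; apply conv_le; rewrite conv_invol;
   auto using inf_le_l, inf_le_r. Qed.
Lemma ded {S : StoneRA} (x y z : S) : (x · y) ⊓ z ≤ x · (y ⊓ (conv S x · z)).
Proof. unfold le. apply dedekind. Qed.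
Lemma ded' {S : StoneRA} (x y z : S) : (y · x) ⊓ z ≤ (y ⊓ (z · conv S x)) · x.
Proof. apply conv_le. rewrite conv_inf, !conv_comp, conv_inf, conv_comp. apply ded. Qed.
Lemma one_top {S : StoneRA} : (𝟙 : S) ≤ ⊤.
Proof. apply le_top. Qed.
Lemma le_comp_top {S : StoneRA} (x : S) : x ≤ x · ⊤.
Proof. rewrite <- (comp_one_r x) at 1. apply comp_mono_r, le_top. Qed.
Lemma le_top_comp {S : StoneRA} (x : S) : x ≤ ⊤ · x.
Proof. rewrite <- (comp_one_l x) at 1. apply comp_mono_l, le_top. Qed.
Lemma sub_le_conv {S : StoneRA} (p : S) : p ≤ 𝟙 -> p ≤ conv S p.
Proof. intro H.
   apply le_trans with (p · conv S p).
   + pose proof (ded p 𝟙 𝟙) as D. rewrite comp_one_r in D.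
     rewrite (proj1 (le_inf _ _) H) in D. eapply le_trans; [exact D|].
     apply comp_mono_r. rewrite comp_one_r. apply inf_le_r.
   + eapply le_trans; [apply comp_mono_l; exact H|]. rewrite comp_one_l; apply le_refl.
Qed.
Lemma sub_conv {S : StoneRA} (p : S) : p ≤ 𝟙 -> conv S p = p.
Proof. intro H. assert (Hc : conv S p ≤ 𝟙) by (rewrite <- conv_one; apply conv_mono; auto).
  apply le_antisym; [|apply sub_le_conv; auto].
  pose proof (sub_le_conv _ Hc) as X. rewrite conv_invol in X. exact X.
Qed.

Lemma sub_mul_l {S : StoneRA} (p x : S) : p ≤ 𝟙 -> p · x ≤ x.
Proof. intro H. eapply le_trans; [apply comp_mono_l; exact H|]. rewrite comp_one_l; apply le_refl. Qed.
Lemma sub_mul_r {S : StoneRA} (p x : S) : p ≤ 𝟙 -> x · p ≤ x.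
Proof. intro H. eapply le_trans; [apply comp_mono_r; exact H|]. rewrite comp_one_r; apply le_refl. Qed.
Lemma conv_sub {S : StoneRA} (p : S) : p ≤ 𝟙 -> conv S p ≤ 𝟙.
Proof. intro H; rewrite <- conv_one; apply conv_mono; auto. Qed.
Lemma sub_top_one {S : StoneRA} (p : S) : p ≤ 𝟙 -> (p · ⊤) ⊓ 𝟙 ≤ p.
Proof. intro H. eapply le_trans; [apply ded|].
  eapply le_trans; [apply comp_mono_r; apply inf_le_r|]. rewrite comp_one_r.
  apply sub_mul_r, conv_sub; auto. Qed.
Lemma sub_top_one' {S : StoneRA} (p : S) : p ≤ 𝟙 -> (⊤ · p) ⊓ 𝟙 ≤ p.
Proof. intro H. eapply le_trans; [apply ded'|].
  eapply le_trans; [apply comp_mono_l; apply inf_le_r|]. rewrite comp_one_l.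
  apply sub_mul_l, conv_sub; auto. Qed.
Lemma dom_le {S : StoneRA} (y : S) : y ≤ ((y · ⊤) ⊓ 𝟙) · y.
Proof. pose proof (ded' y 𝟙 y) as D. rewrite comp_one_l, inf_idem in D.
  eapply le_trans; [exact D|]. apply comp_mono_l. rewrite inf_comm.
  apply inf_mono; [apply comp_mono_r, le_top | apply le_refl]. Qed.
Lemma cod_le {S : StoneRA} (y : S) : y ≤ y · ((⊤ · y) ⊓ 𝟙).
Proof. pose proof (ded y 𝟙 y) as D. rewrite comp_one_r, inf_idem in D.
  eapply le_trans; [exact D|]. apply comp_mono_r. rewrite inf_comm.
  apply inf_mono; [apply comp_mono_l, le_top | apply le_refl]. Qed.
Lemma top_top {S : StoneRA} : (⊤ : S) · ⊤ = ⊤.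
Proof. apply le_antisym; [apply le_top| apply le_comp_top]. Qed.

Lemma atom_nonbot {S : StoneRA} (a : S) : atom a -> a <> ⊥.
Proof. intros [H _]; exact H. Qed.
Lemma atom_le {S : StoneRA} (a y : S) : atom a -> y <> ⊥ -> y ≤ a -> y = a.
Proof. intros [_ H]; auto. Qed.

Lemma D_atom {S : StoneRA} (a : S) : atom a -> atom ((a · ⊤) ⊓ 𝟙).
Proof. intro Ha. split.
 - intro E. apply (atom_nonbot _ Ha). apply le_bot.
   pose proof (dom_le a) as X. rewrite E, comp_bot_l in X. exact X.
 - intros e He Hle.
   assert (H1 : e ≤ 𝟙) by (eapply le_trans; [exact Hle| apply inf_le_r]).
   assert (H2 : e ≤ a · conv S a).
   { eapply le_trans; [exact Hle|]. eapply le_trans; [apply ded|].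
     apply comp_mono_r. eapply le_trans; [apply inf_le_r|]. rewrite comp_one_r; apply le_refl. }
   assert (Hea : e · a <> ⊥).
   { intro E. apply He. apply le_bot.
     assert (X : (e · 𝟙) ⊓ (a · conv S a) ≤ e · (conv S e · (a · conv S a))).
     { eapply le_trans; [apply ded|]. apply comp_mono_r, inf_le_r. }
     rewrite comp_one_r, (proj1 (le_inf _ _) H2), (sub_conv e H1), (comp_assoc e a), E, comp_bot_l,
       comp_bot_r in X. exact X. }
   assert (Ea : e · a = a) by (apply atom_le; auto; apply sub_mul_l; auto).
   apply le_antisym; auto.
   eapply le_trans; [|apply (sub_top_one e H1)].
   apply inf_mono; [|apply le_refl]. rewrite <- Ea at 1. rewrite <- comp_assoc.
   apply comp_mono_r, le_top.
Qed.

Lemma atom_conv {S : StoneRA} (a : S) : atom a -> atom (conv S a).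
Proof. intro Ha. split.
 - intro E. apply (atom_nonbot _ Ha). rewrite <- (conv_invol a), E. apply conv_bot.
 - intros y Hy Hle. assert (conv S y = a).
   { apply atom_le; auto. intro E. apply Hy. rewrite <- (conv_invol y), E; apply conv_bot.
     apply conv_le; rewrite conv_invol; auto. }
   rewrite <- H; symmetry; apply conv_invol.
Qed.

Lemma Cd_atom {S : StoneRA} (a : S) : atom a -> atom ((⊤ · a) ⊓ 𝟙).
Proof. intro Ha. apply atom_conv, D_atom in Ha. apply atom_conv in Ha.
  rewrite conv_inf, conv_comp, conv_top, conv_invol, conv_one in Ha. exact Ha. Qed.

Lemma rect_eq {S : StoneRA} (a : S) : rectangle a ->
  a = (((a · ⊤) ⊓ 𝟙) · ⊤) · ((⊤ · a) ⊓ 𝟙).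
Proof. unfold rectangle. intro R. apply le_antisym.
 - eapply le_trans; [apply dom_le|]. rewrite <- comp_assoc. apply comp_mono_r.
   eapply le_trans; [apply cod_le|]. apply comp_mono_l, le_top.
 - eapply le_trans; [|exact R].
   eapply le_trans; [apply comp_mono; [apply comp_mono_l; apply inf_le_l| apply inf_le_l]|].
   rewrite !comp_assoc. apply comp_mono_l.
   rewrite <- !comp_assoc, !top_top. apply le_refl.
Qed.

Lemma regular_sub {S : StoneRA} (p : S) : p ≤ 𝟙 -> (p · ⊤) · p ≤ p -> (⊤ · p) · ⊤ = ⊤ ->
  pc S (pc S p) = p.
Proof. intros H1 R Sm.
  set (q := pc S (pc S p)).
  assert (Hq1 : q ≤ 𝟙) by (unfold q; rewrite <- pc_pc_one; apply pcpc_mono; auto).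
  assert (Hqr : (q · ⊤) · q ≤ q).
  { pose proof (pcpc_mono _ _ R) as X. rewrite !pc_pc_comp, pcpc_top in X. exact X. }
  set (u := (q · ⊤) · p).
  assert (Hu1 : u ≤ 𝟙).
  { unfold u. eapply le_trans; [apply comp_mono_r, le_pcpc|]. eapply le_trans; [exact Hqr|exact Hq1]. }
  assert (Hut : u · ⊤ = q · ⊤).
  { unfold u. rewrite <- comp_assoc, <- comp_assoc, (comp_assoc ⊤ p ⊤), Sm. reflexivity. }
  assert (Hq : q ≤ ⊤ · p).
  { eapply le_trans; [apply (inf_glb q (q · ⊤) 𝟙); [apply le_comp_top|exact Hq1]|].
    rewrite <- Hut. eapply le_trans; [apply sub_top_one; exact Hu1|].
    unfold u. apply comp_mono_l, le_top. }
  apply le_antisym; [|apply le_pcpc].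
  fold q. eapply le_trans; [|apply (sub_top_one' p H1)]. apply inf_glb; auto.
Qed.

Lemma ptq_nonbot {S : StoneRA} (p q : S) : atom p -> (⊤ · q) · ⊤ = ⊤ -> (p · ⊤) · q <> ⊥.
Proof. intros Hp Sm E. apply (atom_nonbot _ Hp). apply le_bot.
  assert (X : ((p · ⊤) · q) · ⊤ = p · ⊤).
  { rewrite <- comp_assoc, <- comp_assoc, (comp_assoc ⊤ q ⊤), Sm. reflexivity. }
  rewrite E, comp_bot_l in X. rewrite X. apply le_comp_top. Qed.

Lemma ptq_le_p {S : StoneRA} (p q : S) : ((p · ⊤) · q) · ⊤ ≤ p · ⊤.
Proof. rewrite <- !comp_assoc. apply comp_mono_r, le_top. Qed.
Lemma ptq_le_q {S : StoneRA} (p q : S) : ⊤ · ((p · ⊤) · q) ≤ ⊤ · q.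
Proof. rewrite !comp_assoc. apply comp_mono_l, le_top. Qed.

Lemma ptq_atom {S : StoneRA} (p q : S) : atom p -> p ≤ 𝟙 -> q ≤ 𝟙 -> (q · ⊤) · q ≤ q ->
  (⊤ · q) · ⊤ = ⊤ -> atom ((p · ⊤) · q).
Proof. intros Hp Hp1 Hq1 Rq Sm. split; [apply ptq_nonbot; auto|].
  intros y Hy Hle. apply le_antisym; auto.
  assert (He : (y · ⊤) ⊓ 𝟙 = p).
  { apply atom_le; auto.
    - intro E. apply Hy, le_bot. pose proof (dom_le y) as X. rewrite E, comp_bot_l in X; exact X.
    - eapply le_trans; [|apply (sub_top_one p Hp1)]. apply inf_mono; [|apply le_refl].
      eapply le_trans; [apply comp_mono_l; exact Hle|]. apply ptq_le_p. }
  assert (Hp' : p ≤ y · ⊤) by (rewrite <- He; apply inf_le_l).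
  assert (S1 : (p · ⊤) · q ≤ y · (⊤ · q)).
  { eapply le_trans; [apply comp_mono_l, comp_mono_l; exact Hp'|].
    rewrite <- (comp_assoc y ⊤ ⊤), top_top, <- comp_assoc. apply le_refl. }
  apply le_trans with (y · (conv S y · ((p · ⊤) · q))).
  { apply le_trans with ((y · (⊤ · q)) ⊓ ((p · ⊤) · q)).
    - apply inf_glb; auto using le_refl.
    - eapply le_trans; [apply ded|]. apply comp_mono_r, inf_le_r. }
  eapply le_trans; [apply comp_mono_r|rewrite comp_one_r; apply le_refl].
  assert (Hc : conv S y ≤ q · (⊤ · p)).
  { eapply le_trans; [apply conv_mono; exact Hle|].
    rewrite !conv_comp, conv_top, (sub_conv p Hp1), (sub_conv q Hq1). apply le_refl. }
  eapply le_trans; [apply comp_mono_l; exact Hc|].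
  rewrite (comp_assoc (q · (⊤ · p)) (p · ⊤) q).
  eapply le_trans; [|exact Hq1]. eapply le_trans; [|exact Rq].
  apply comp_mono_l. rewrite <- comp_assoc. apply comp_mono_r, le_top.
Qed.

Lemma D_below {S : StoneRA} (b p q : S) : atom b -> b ≤ (p · ⊤) · q -> atom p -> p ≤ 𝟙 ->
  (b · ⊤) ⊓ 𝟙 = p.
Proof. intros Hb Hle Hp Hp1. apply atom_le; auto. apply atom_nonbot, D_atom; auto.
  eapply le_trans; [|apply (sub_top_one p Hp1)]. apply inf_mono; [|apply le_refl].
  eapply le_trans; [apply comp_mono_l; exact Hle|]. apply ptq_le_p. Qed.
Lemma Cd_below {S : StoneRA} (b p q : S) : atom b -> b ≤ (p · ⊤) · q -> atom q -> q ≤ 𝟙 ->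
  (⊤ · b) ⊓ 𝟙 = q.
Proof. intros Hb Hle Hq Hq1. apply atom_le; auto. apply atom_nonbot, Cd_atom; auto.
  eapply le_trans; [|apply (sub_top_one' q Hq1)]. apply inf_mono; [|apply le_refl].
  eapply le_trans; [apply comp_mono_r; exact Hle|]. apply ptq_le_q. Qed.

Lemma finite_cover {A : Type} (l : list A) : forall (P : A -> Prop),
  (forall a, P a -> In a l) ->
  exists l', NoDup l' /\ length l' <= length l /\ forall a, In a l' <-> P a.
Proof. induction l as [|h t IH]; intros P H.
 - exists []. split; [constructor|split; [simpl; lia| intro a; simpl; split; [tauto| intro Pa; exact (H a Pa)]]].
 - destruct (IH (fun a => P a /\ a <> h)) as [l' [N [L E]]].
   { intros a [Pa Na]. destruct (H a Pa) as [e|i]; auto. congruence. }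
   destruct (classic (P h)) as [Ph|Ph].
   + exists (h :: l'). repeat split.
     * constructor; auto. intro I. apply E in I. tauto.
     * simpl; lia.
     * intros [e|i]; [subst; auto| apply E in i; tauto].
     * intro Pa. destruct (classic (a = h)) as [e|n]; [left; auto|right; apply E; auto].
   + exists l'. repeat split; auto.
     * simpl; lia.
     * intro i; apply E in i; tauto.
     * intro Pa. apply E. split; auto. intro e; subst; tauto.
Qed.

Lemma abc_unique {S : StoneRA} (x : S) n m : atoms_below_card x n -> atoms_below_card x m -> n = m.
Proof. intros [l1 [N1 [L1 E1]]] [l2 [N2 [L2 E2]]]. subst.
  apply Nat.le_antisymm; apply NoDup_incl_length; auto; intros a i.
  - apply E2, E1, i.
  - apply E1, E2, i. Qed.

Lemma C_some {S : StoneRA} (x : S) n : atoms_below_card x n -> C x = Some n.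
Proof. intro H. unfold C. destruct (excluded_middle_informative _) as [e|e].
 - destruct (constructive_indefinite_description _ e) as [m Hm]. simpl. f_equal.
   eapply abc_unique; eauto.
 - exfalso; apply e; eauto. Qed.

Lemma C_inv {S : StoneRA} (x : S) n : C x = Some n -> atoms_below_card x n.
Proof. unfold C. destruct (excluded_middle_informative _) as [e|e]; [|discriminate].
  destruct (constructive_indefinite_description _ e) as [m Hm]. simpl. intro H; injection H; intros; subst; auto. Qed.

Lemma cover_card {S : StoneRA} (x : S) (l : list S) :
  (forall a, atom a -> a ≤ x -> In a l) -> exists m, m <= length l /\ atoms_below_card x m.
Proof. intro H. destruct (finite_cover l (fun a => atom a /\ a ≤ x)) as [l' [N [L E]]].
  { intros a [A B]; auto. }
  exists (length l'). split; auto. exists l'; auto. Qed.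

Lemma NoDup_prod {A B : Type} (l : list A) (l' : list B) : NoDup l -> NoDup l' -> NoDup (list_prod l l').
Proof. intros N N'. induction N as [|a l Na N IH]; simpl; [constructor|].
  apply NoDup_app; auto.
  - apply NoDup_map_NoDup_ForallPairs; auto. intros x y _ _ E; injection E; auto.
  - intros [u v] I1 I2. apply in_map_iff in I1. destruct I1 as [w [E _]]. injection E; intros; subst.
    apply in_prod_iff in I2. tauto.
Qed.

Lemma lower_bound {S : StoneRA} (L l : list S) (f : S -> S -> S) :
  NoDup L -> (forall p, In p L -> atom p /\ p ≤ 𝟙) ->
  (forall p q, In p L -> In q L -> atom (f p q) /\ f p q ≤ (p · ⊤) · q) ->
  (forall a, In a l <-> atom a /\ a ≤ ⊤) ->
  length L * length L <= length l.
Proof. intros N HL Hf E.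
  rewrite <- length_prod, <- (length_map (fun pq => f (fst pq) (snd pq))).
  apply NoDup_incl_length.
  - apply NoDup_map_NoDup_ForallPairs; [|apply NoDup_prod; auto].
    intros [p q] [p' q'] I1 I2 Eq. simpl in Eq.
    apply in_prod_iff in I1, I2. destruct I1 as [I1 I1']. destruct I2 as [I2 I2'].
    destruct (HL _ I1), (HL _ I1'), (HL _ I2), (HL _ I2').
    destruct (Hf _ _ I1 I1') as [A1 B1]. destruct (Hf _ _ I2 I2') as [A2 B2].
    rewrite Eq in A1, B1.
    pose proof (D_below _ _ _ A1 B1) as D1. pose proof (D_below _ _ _ A2 B2) as D2.
    pose proof (Cd_below _ _ _ A1 B1) as C1. pose proof (Cd_below _ _ _ A2 B2) as C2.
    specialize (D1 H H0); specialize (D2 H3 H4); specialize (C1 H1 H2); specialize (C2 H5 H6).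
    congruence.
  - intros b Hb. apply in_map_iff in Hb. destruct Hb as [[p q] [Eb I]]. simpl in Eb. subst.
    apply in_prod_iff in I. destruct I. apply E. split; [apply Hf; auto| apply le_top].
Qed.

Lemma below_pcpc {S : StoneRA} (x a : S) : atomic S -> atom a ->
  (forall b, atom b -> b ≤ x -> b = a) -> x ≤ pc S (pc S a).
Proof. intros Hat Ha H. apply le_pc. destruct (classic (x ⊓ pc S a = ⊥)) as [h|h]; auto.
  exfalso. destruct (Hat _ h) as [b [Hb Hle]].
  assert (b = a) by (apply H; auto; eapply le_trans; [exact Hle| apply inf_le_l]). subst.
  assert (X : a ≤ pc S a) by (eapply le_trans; [exact Hle| apply inf_le_r]).
  apply le_pc in X. rewrite inf_idem in X. apply (atom_nonbot _ Ha X). Qed.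

Lemma one_atom_iff {S : StoneRA} : (forall a : S, atom a -> pc S (pc S a) = a) -> atomic S ->
  forall x : S, atom x <-> C x = Some 1.
Proof. intros Reg Hat x. split.
 - intro Hx. apply C_some. exists [x]. split; [|split; [reflexivity|]].
   + constructor; [intro i; inversion i| constructor].
   + intro a. split.
     * intros [e|[]]; subst; split; auto using le_refl.
     * intros [Ha Hle]. left. symmetry. apply atom_le; auto. apply atom_nonbot; auto.
 - intro H. apply C_inv in H. destruct H as [l [N [L E]]].
   destruct l as [|a [|a' l]]; simpl in L; try discriminate.
   assert (Ha : atom a /\ a ≤ x) by (apply E; left; auto). destruct Ha as [Ha Hax].
   assert (U : forall b, atom b -> b ≤ x -> b = a).
   { intros b Hb Hbx. destruct (proj2 (E b) (conj Hb Hbx)) as [e|[]]; auto. }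
   pose proof (below_pcpc x a Hat Ha U) as X. rewrite (Reg a Ha) in X.
   rewrite (le_antisym _ _ X Hax). exact Ha.
Qed.

Lemma reg1 {S : StoneRA} : atom_rectangular S -> simple S -> forall a : S, atom a -> pc S (pc S a) = a.
Proof. intros Har Hs a Ha.
  pose proof (D_atom a Ha) as HD. pose proof (Cd_atom a Ha) as HC.
  assert (RD : pc S (pc S ((a · ⊤) ⊓ 𝟙)) = (a · ⊤) ⊓ 𝟙).
  { apply regular_sub; [apply inf_le_r| apply Har; auto| apply Hs, atom_nonbot; auto]. }
  assert (RC : pc S (pc S ((⊤ · a) ⊓ 𝟙)) = (⊤ · a) ⊓ 𝟙).
  { apply regular_sub; [apply inf_le_r| apply Har; auto| apply Hs, atom_nonbot; auto]. }
  pose proof (rect_eq a (Har a Ha)) as R.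
  rewrite R at 1. rewrite !pc_pc_comp, pcpc_top, RD, RC. symmetry; exact R.
Qed.

Lemma upper {S : StoneRA} n : atom_rectangular S -> C (𝟙 : S) = Some n ->
  exists m, m <= n * n /\ atoms_below_card (⊤ : S) m.
Proof. intros Har H. apply C_inv in H. destruct H as [L [N [Ln E]]].
  destruct (cover_card ⊤ (map (fun pq => (fst pq · ⊤) · snd pq) (list_prod L L))) as [m [Hm Hc]].
  - intros a Ha _. apply in_map_iff. exists ((a · ⊤) ⊓ 𝟙, (⊤ · a) ⊓ 𝟙). split.
    + simpl. symmetry. apply rect_eq, Har, Ha.
    + apply in_prod_iff. split; apply E; split; auto using D_atom, Cd_atom, inf_le_r.
  - exists m. split; auto. rewrite length_map, length_prod, Ln in Hm. exact Hm.
Qed.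

Theorem mainTheorem5 (S : StoneRA) :
  (atomic S -> atom_rectangular S -> simple S ->
     forall x : S, atom x <-> C x = Some 1) /\
  (atomic S -> relation_algebra S ->
     forall x : S, atom x <-> C x = Some 1) /\
  (atom_rectangular S -> ole (C (top S)) (osq (C (one S)))) /\
  (atomic S -> simple S -> finitely_many_atoms S ->
     ole (osq (C (one S))) (C (top S))) /\
  (atom_rectangular S -> atom_simple S -> C (top S) = osq (C (one S))) /\
  (finitely_many_atoms S -> C (top S) <> None).
Proof.
  split; [|split; [|split; [|split; [|split]]]].
  - intros Hat Har Hs. apply one_atom_iff; auto. apply reg1; auto.
  - intros Hat Hra. apply one_atom_iff; auto.
  - intros Har. destruct (C (one S)) as [n|] eqn:E1; simpl.
    + destruct (upper n Har E1) as [m [Hm Hc]]. rewrite (C_some _ _ Hc). exact Hm.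
    + destruct (C (top S)); exact I.
  - intros Hat Hs [l Hl].
    destruct (cover_card (top S) l) as [m [_ Hm]]; [intros; auto|].
    destruct (cover_card (one S) l) as [n [_ Hn]]; [intros; auto|].
    rewrite (C_some _ _ Hm), (C_some _ _ Hn). simpl.
    destruct Hm as [lt [Nt [Lt Et]]]. destruct Hn as [L [N [Ln En]]]. subst.
    apply (lower_bound L lt (fun p q => epsilon (inhabits (bot S)) (fun b => atom b /\ b ≤ (p · ⊤) · q))); auto.
    + intros p Ip; apply En; auto.
    + intros p q Ip Iq. apply (epsilon_spec (inhabits (bot S)) (fun b => atom b /\ b ≤ (p · ⊤) · q)).
      apply Hat. apply ptq_nonbot; [apply En; auto|]. apply Hs, atom_nonbot, En, Iq.
  - intros Har Has. destruct (C (one S)) as [n|] eqn:E1; simpl.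
    + destruct (upper n Har E1) as [m [Hm Hc]]. rewrite (C_some _ _ Hc). f_equal.
      apply Nat.le_antisymm; auto.
      apply C_inv in E1. destruct Hc as [lt [Nt [Lt Et]]]. destruct E1 as [L [N [Ln En]]]. subst.
      apply (lower_bound L lt (fun p q => (p · ⊤) · q)); auto.
      * intros p Ip; apply En; auto.
      * intros p q Ip Iq. destruct (En p) as [[Hp Hp1] _]; auto. destruct (En q) as [[Hq Hq1] _]; auto.
        split; [apply ptq_atom; auto; [apply (Har q Hq)|apply (Has q Hq)]| apply le_refl].
    + destruct (C (top S)) as [m|] eqn:Et; auto. exfalso.
      apply C_inv in Et. destruct Et as [lt [Nt [Lt Et]]].
      destruct (cover_card (one S) lt) as [k [_ Hk]].
      { intros a Ha _. apply Et; split; auto using le_top. }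
      rewrite (C_some _ _ Hk) in E1. discriminate.
  - intros [l Hl]. destruct (cover_card (top S) l) as [m [_ Hm]]; [intros; auto|].
    rewrite (C_some _ _ Hm). discriminate.
Qed.
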